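(* Let $N\ge 2$, $d\ge1$, and let $\tilde\psi:\mathbb{R}\to\mathbb{R}$ be a positive, bounded, continuous function with $\tilde K:=\|\tilde\psi\|_\infty$. Let $\{t_n\}_{n\in\mathbb{N}_0}$ be an increasing sequence of nonnegative numbers with $t_0=0$, $t_n\to\infty$, and define $\alpha:[0,\infty)\to\{-1,1\}$ by $\alpha(0)=1$, $\alpha(t)=1$ on $(t_{2n},t_{2n+1})$, $\alpha(t)=-1$ on $[t_{2n+1},t_{2n+2}]$, $n\in\mathbb{N}_0$. Assume $t_{2n+2}-t_{2n+1}<\frac{\ln 2}{\tilde K}$ for all $n\in\mathbb{N}_0$, $$\sum_{p=0}^{\infty}\ln\left(\frac{e^{\tilde K(t_{2p+2}-t_{2p+1})}}{2-e^{\tilde K(t_{2p+2}-t_{2p+1})}}\right)<+\infty,$$ $$\sum_{p=0}^{\infty}\ln\left(\max\left\{1-e^{-\tilde K(t_{2p+1}-t_{2p})},\,1-\frac{\tilde\psi_0}{\tilde K}\big(1-e^{-\tilde K(t_{2p+1}-t_{2p})}\big)\right\}\right)=-\infty,$$ where $\tilde\psi_0:=\min_{|y|\le \tilde M^0}\tilde\psi(y)$ and $$\tilde M^0:=e^{\sum_{p=0}^{\infty}\ln\left(\frac{e^{\tilde K(t_{2p+2}-t_{2p+1})}}{2-e^{\tilde K(t_{2p+2}-t_{2p+1})}}\right)}d(0),\qquad d(0)=\max_{i,j}|x_i^0-x_j^0|.$$ Then every solution $\{x_i\}_{i=1,\dots,N}$ of $$\frac{d}{dt}x_i(t)=\frac{1}{N-1}\sum_{j\ne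 i}\alpha(t)\,\tilde\psi(|x_i(t)-x_j(t)|)\,(x_j(t)-x_i(t)),\quad t>0,\qquad x_i(0)=x_i^0\in\mathbb{R}^d,$$ converges to consensus, i.e. $\lim_{t\to\infty}\max_{i,j}|x_i(t)-x_j(t)|=0$.
   Context: $\mathbb{N}_0=\{0,1,2,\dots\}$. A solution is a continuous function that is $C^1$ on each interval $(t_n,t_{n+1})$ and satisfies the equation there. *)

(* Defs.v *)
From Stdlib Require Import Reals Lra Lia.
From Coquelicot Require Import Coquelicot.
Open Scope R_scope.

(* vectors of R^d are represented by functions nat -> R, only the
   coordinates k < d being relevant *)

Fixpoint sumR (n : nat) (f : nat -> R) : R :=
  match n with O => 0 | S m => sumR m f + f m end.

(* max_{k<n} f k (0 if n = 0; used only for nonnegative quantities) *)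
Fixpoint maxR (n : nat) (f : nat -> R) : R :=
  match n with O => 0 | S m => Rmax (maxR m f) (f m) end.

Definition vnorm (d : nat) (v : nat -> R) : R :=
  sqrt (sumR d (fun k => (v k) ^ 2)).

Definition vsub (u v : nat -> R) : nat -> R := fun k => u k - v k.

Definition diam (N d : nat) (y : nat -> nat -> R) : R :=
  maxR N (fun i => maxR N (fun j => vnorm d (vsub (y i) (y j)))).

Definition rhs (N d : nat) (a : R) (psi : R -> R) (y : nat -> nat -> R)
  (i k : nat) : R :=
  / (INR N - 1) *
  sumR N (fun j => if Nat.eqb j i then 0
                   else a * psi (vnorm d (vsub (y i) (y j))) * (y j k - y i k)).

(* x : agent -> time -> vector.  Solution in the sense of the paper:
   continuous on [0,oo), C^1 on each (t_n, t_{n+1}) where it satisfies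
   the equation, with the initial datum x0. *)
Definition is_solution (N d : nat) (tt : nat -> R) (alpha : R -> R)
  (psi : R -> R) (x0 : nat -> nat -> R) (x : nat -> R -> nat -> R) : Prop :=
  (forall i k, (i < N)%nat -> (k < d)%nat -> x i 0 k = x0 i k) /\
  (forall i k, (i < N)%nat -> (k < d)%nat -> forall s, 0 <= s ->
     filterlim (fun r => x i r k) (within (fun r => 0 <= r) (locally s))
               (locally (x i s k))) /\
  (forall n i k, (i < N)%nat -> (k < d)%nat -> forall s, tt n < s < tt (S n) ->
     is_derive (fun r => x i r k) s
       (rhs N d (alpha s) psi (fun j => x j s) i k) /\
     continuous (fun r => Derive (fun r' => x i r' k) r) s).

Definition termA (K : R) (tt : nat -> R) (p : nat) : R :=
  let D := tt (2 * p + 2)%nat - tt (2 * p + 1)%nat in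
  ln (exp (K * D) / (2 - exp (K * D))).

Definition termB (K psi0 : R) (tt : nat -> R) (p : nat) : R :=
  let D := tt (2 * p + 1)%nat - tt (2 * p)%nat in
  ln (Rmax (1 - exp (- K * D)) (1 - psi0 / K * (1 - exp (- K * D)))).

(* Main.v *)
Require Import Defs.
From Stdlib Require Import Reals Lra Lia Classical.
From Coquelicot Require Import Coquelicot.
Open Scope R_scope.


Lemma sumR_ext n f g : (forall k, (k < n)%nat -> f k = g k) -> sumR n f = sumR n g.
Proof. induction n; simpl; intros H; auto. rewrite IHn by (intros; apply H; lia). rewrite H by lia; auto. Qed.

Lemma sumR_le n f g : (forall k, (k < n)%nat -> f k <= g k) -> sumR n f <= sumR n g.
Proof. induction n; simpl; intros H; [lra|]. specialize (IHn (fun k Hk => H k ltac:(lia))). specialize (H n ltac:(lia)). lra. Qed.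

Lemma sumR_plus n f g : sumR n (fun k => f k + g k) = sumR n f + sumR n g.
Proof. induction n; simpl; [lra|]. rewrite IHn; lra. Qed.

Lemma sumR_minus n f g : sumR n (fun k => f k - g k) = sumR n f - sumR n g.
Proof. induction n; simpl; [lra|]. rewrite IHn; lra. Qed.

Lemma sumR_scal n c f : sumR n (fun k => c * f k) = c * sumR n f.
Proof. induction n; simpl; [lra|]. rewrite IHn; lra. Qed.

Lemma sumR_swap n m (g : nat -> nat -> R) :
  sumR n (fun k => sumR m (fun l => g k l)) = sumR m (fun l => sumR n (fun k => g k l)).
Proof.
  induction n; simpl.
  - induction m; simpl; [lra|]. rewrite <- IHm; lra.
  - rewrite IHn. rewrite <- sumR_plus. reflexivity.
Qed.

Lemma sumR_nonneg n f : (forall k, (k < n)%nat -> 0 <= f k) -> 0 <= sumR n f.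
Proof. intros H. apply Rle_trans with (sumR n (fun _ => 0)).
  - clear H; induction n; simpl; lra.
  - apply sumR_le; auto. Qed.

Lemma sumR_le_term n f j : (j < n)%nat -> (forall k, (k < n)%nat -> f k <= 0) -> sumR n f <= f j.
Proof.
  induction n; intros Hj H; [lia|]. simpl.
  destruct (Nat.eq_dec j n).
  - subst. assert (sumR n f <= 0). { apply Rle_trans with (sumR n (fun _ => 0)).
      apply sumR_le; intros; apply H; lia. clear; induction n; simpl; lra. } lra.
  - specialize (IHn ltac:(lia) (fun k Hk => H k ltac:(lia))). specialize (H n ltac:(lia)). lra.
Qed.

Lemma sumR_count n i g B : (forall l, (l < n)%nat -> g l <= B) ->
  sumR n (fun l => if Nat.eqb l i then 0 else g l) <= (INR n - (if Nat.ltb i n then 1 else 0)) * B.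
Proof.
  induction n; intros H; cbn [sumR]. { simpl; lra. }
  specialize (IHn (fun l Hl => H l ltac:(lia))).
  rewrite S_INR.
  destruct (Nat.eqb n i) eqn:E.
  - apply Nat.eqb_eq in E; subst.
    rewrite (proj2 (Nat.ltb_ge i i)) in IHn by lia.
    rewrite (proj2 (Nat.ltb_lt i (S i))) by lia. lra.
  - apply Nat.eqb_neq in E.
    assert (Nat.ltb i (S n) = Nat.ltb i n) as ->.
    { destruct (Nat.ltb i n) eqn:E2. apply Nat.ltb_lt in E2. apply Nat.ltb_lt; lia.
      apply Nat.ltb_ge in E2. apply Nat.ltb_ge; lia. }
    specialize (H n ltac:(lia)). lra.
Qed.

Lemma sumR_count' N i g B : (i < N)%nat -> (forall l, (l < N)%nat -> g l <= B) ->
  sumR N (fun l => if Nat.eqb l i then 0 else g l) <= (INR N - 1) * B.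
Proof. intros Hi H. pose proof (sumR_count N i g B H). rewrite (proj2 (Nat.ltb_lt i N) Hi) in H0. exact H0. Qed.

Lemma maxR_ge0 n f : 0 <= maxR n f.
Proof. induction n; simpl; [lra|]. apply Rle_trans with (maxR n f); auto; apply Rmax_l. Qed.

Lemma maxR_ge n f k : (k < n)%nat -> f k <= maxR n f.
Proof. induction n; intros Hk; [lia|]. simpl. destruct (Nat.eq_dec k n).
  subst; apply Rmax_r. apply Rle_trans with (maxR n f). apply IHn; lia. apply Rmax_l. Qed.

Lemma maxR_le n f c : 0 <= c -> (forall k, (k < n)%nat -> f k <= c) -> maxR n f <= c.
Proof. induction n; intros Hc H; simpl; auto. apply Rmax_lub. apply IHn; auto. apply H; lia. Qed.

Lemma maxR_ext n f g : (forall k, (k < n)%nat -> f k = g k) -> maxR n f = maxR n g.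
Proof. induction n; simpl; intros H; auto. rewrite IHn by (intros; apply H; lia). rewrite H by lia; auto. Qed.

Lemma Rmax_scal a b c : 0 <= c -> Rmax (a * c) (b * c) = Rmax a b * c.
Proof. intros Hc. unfold Rmax. destruct (Rle_dec (a*c) (b*c)); destruct (Rle_dec a b); try nra.
  all: destruct (Req_dec c 0); [subst; ring|]; exfalso; apply n; apply Rmult_le_reg_r with c; lra. Qed.

Lemma maxR_scal n f c : 0 <= c -> maxR n (fun k => f k * c) = maxR n f * c.
Proof. induction n; intros Hc; simpl; [ring|]. rewrite IHn by auto. apply Rmax_scal; auto. Qed.

Lemma Rmax_sqrt a b : 0 <= a -> 0 <= b -> Rmax (sqrt a) (sqrt b) = sqrt (Rmax a b).
Proof. intros Ha Hb. unfold Rmax. destruct (Rle_dec (sqrt a) (sqrt b)); destruct (Rle_dec a b); auto.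
  all: try (exfalso; apply n; apply sqrt_le_1; auto; lra).
  all: try (exfalso; apply n; apply sqrt_le_0; auto; lra).
Qed.

Lemma maxR_sqrt n f : (forall k, 0 <= f k) -> maxR n (fun k => sqrt (f k)) = sqrt (maxR n f).
Proof. induction n; intros H; simpl. rewrite sqrt_0; auto. rewrite IHn by auto. apply Rmax_sqrt; auto. apply maxR_ge0. Qed.


Lemma cont_eps (f : R -> R) (D : R -> Prop) t :
  filterlim f (within D (locally t)) (locally (f t)) ->
  forall e, 0 < e -> exists d, 0 < d /\ forall u, D u -> Rabs (u - t) < d -> Rabs (f u - f t) < e.
Proof.
  intros H e He. apply filterlim_locally with (eps := mkposreal e He) in H.
  destruct H as [d Hd]. exists d. split; [apply cond_pos|].
  intros u Du Hu. specialize (Hd u Hu Du). exact Hd.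
Qed.

Lemma deriv_below h t0 l e : is_derive h t0 l -> l < e ->
  exists d, 0 < d /\ forall u, t0 < u < t0 + d -> h u < h t0 + e * (u - t0).
Proof.
  intros H Hl. apply is_derive_Reals in H.
  destruct (H (e - l) ltac:(lra)) as [d Hd].
  exists d. split; [apply cond_pos|]. intros u Hu.
  specialize (Hd (u - t0) ltac:(lra) ltac:(rewrite Rabs_right; lra)).
  replace (t0 + (u - t0)) with u in Hd by ring.
  apply Rabs_lt_between in Hd. destruct Hd as [_ Hd].
  assert (0 < u - t0) by lra.
  apply Rlt_le_trans with (h t0 + (l + (e - l)) * (u - t0)); [|right; ring].
  assert ((h u - h t0) / (u - t0) < l + (e - l)) by lra.
  apply (Rmult_lt_compat_r (u - t0)) in H1; auto.
  unfold Rdiv in H1. rewrite Rmult_assoc, Rinv_l in H1 by lra. lra.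
Qed.

Lemma fin_delta n t0 (Q : nat -> R -> Prop) :
  (forall k, (k < n)%nat -> exists d, 0 < d /\ forall u, t0 < u < t0 + d -> Q k u) ->
  exists d, 0 < d /\ forall k, (k < n)%nat -> forall u, t0 < u < t0 + d -> Q k u.
Proof.
  induction n; intros H.
  - exists 1. split; [lra|]. intros; lia.
  - destruct IHn as [d1 [Hd1 H1]]. { intros; apply H; lia. }
    destruct (H n ltac:(lia)) as [d2 [Hd2 H2]].
    exists (Rmin d1 d2). split. { apply Rmin_pos; auto. }
    intros k Hk u Hu. pose proof (Rmin_l d1 d2). pose proof (Rmin_r d1 d2).
    destruct (Nat.eq_dec k n). subst; apply H2; lra. apply H1; [lia|lra].
Qed.

Lemma maxR_gt n f c : 0 <= c -> c < maxR n f -> exists k, (k < n)%nat /\ c < f k.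
Proof.
  intros Hc H. apply NNPP. intros Hn. apply (Rlt_not_le _ _ H).
  apply maxR_le; auto. intros k Hk. apply Rnot_lt_le. intros Hc'. apply Hn. exists k; auto.
Qed.

Definition HH (N : nat) (h : nat -> nat -> R -> R) t := maxR N (fun i => maxR N (fun j => h i j t)).

Lemma core (N : nat) (h h' : nat -> nat -> R -> R) (s T : R) :
  s <= T ->
  (forall i j, (i < N)%nat -> (j < N)%nat -> forall t, s <= t <= T ->
      filterlim (h i j) (within (fun r => s <= r <= T) (locally t)) (locally (h i j t))) ->
  (forall i j, (i < N)%nat -> (j < N)%nat -> forall t, s < t < T -> is_derive (h i j) t (h' i j t)) ->
  (forall i j, (i < N)%nat -> (j < N)%nat -> forall t, s < t < T -> h i j t = HH N h t -> h' i j t <= 0) ->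
  HH N h T <= HH N h s.
Proof.
  intros HsT Hc Hd Hm.
  apply Rnot_lt_le; intros Hlt.
  set (e := (HH N h T - HH N h s) / (2 * (1 + (T - s)))).
  assert (He : 0 < e). { unfold e; apply Rdiv_lt_0_compat; lra. }
  set (g := fun t => HH N h s + e * (1 + (t - s))).
  assert (HgT : g T < HH N h T). { unfold g, e. field_simplify; [|lra].
     apply Rmult_lt_reg_r with 2; [lra|]. unfold Rdiv. rewrite Rmult_assoc, Rinv_l by lra. lra. }
  assert (Hs0 : 0 <= HH N h s) by apply maxR_ge0.
  assert (Hg0 : forall t, s <= t -> 0 <= g t). { intros; unfold g. nra. }
  set (E := fun t => s <= t <= T /\ forall u, s <= u <= t -> HH N h u <= g u).
  assert (Es : E s). { split; [lra|]. intros u Hu. replace u with s by lra. unfold g; nra. }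
  destruct (completeness E) as [t0 [Hub Hleast]].
  { exists T. intros t [Ht _]; lra. }
  { exists s; auto. }
  assert (Hst0 : s <= t0) by (apply Hub; auto).
  assert (Ht0T : t0 <= T). { apply Hleast. intros t [Ht _]; lra. }
  assert (HA : forall u, s <= u < t0 -> HH N h u <= g u).
  { intros u Hu. assert (~ is_upper_bound E u). { intros Hb. specialize (Hleast u Hb). lra. }
    apply not_all_ex_not in H. destruct H as [t Ht].
    apply imply_to_and in Ht. destruct Ht as [[Ht1 Ht2] Ht3].
    apply Ht2. lra. }
  assert (HB : HH N h t0 <= g t0).
  { apply Rnot_lt_le. intros Hgt.
    destruct (maxR_gt _ _ _ (Hg0 t0 Hst0) Hgt) as [i [Hi Hi']].
    destruct (maxR_gt _ _ _ (Hg0 t0 Hst0) Hi') as [j [Hj Hj']].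
    destruct (Req_dec t0 s) as [Heq|Hne].
    { subst t0. unfold g in Hgt. nra. }
    destruct (cont_eps _ _ _ (Hc i j Hi Hj t0 ltac:(lra)) ((h i j t0 - g t0)/2) ltac:(lra)) as [d [Hd0 Hd']].
    set (u := t0 - Rmin (d/2) ((t0 - s)/2)).
    assert (Hm1 : 0 < Rmin (d/2) ((t0 - s)/2)) by (apply Rmin_pos; lra).
    pose proof (Rmin_l (d/2) ((t0 - s)/2)). pose proof (Rmin_r (d/2) ((t0 - s)/2)).
    specialize (Hd' u ltac:(unfold u; lra) ltac:(unfold u; rewrite Rabs_left; lra)).
    apply Rabs_lt_between in Hd'.
    assert (HHu : h i j u <= HH N h u).
    { unfold HH. apply Rle_trans with (maxR N (fun j0 => h i j0 u)).
      apply (maxR_ge N (fun j0 => h i j0 u) j Hj). apply (maxR_ge N (fun i0 => maxR N (fun j0 => h i0 j0 u)) i Hi). }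
    specialize (HA u ltac:(unfold u; lra)).
    assert (g u <= g t0) by (unfold g, u; nra).
    lra. }
  assert (Et0 : E t0).
  { split; [lra|]. intros u Hu. destruct (Req_dec u t0). subst; auto. apply HA; lra. }
  assert (Ht0T' : t0 < T).
  { destruct (Req_dec t0 T); [|lra]. subst t0. lra. }
  assert (Hpair : forall i, (i < N)%nat -> exists d, 0 < d /\ forall u, t0 < u < t0 + d ->
             forall j, (j < N)%nat -> u <= T -> h i j u <= g u).
  { intros i Hi. cut (exists d, 0 < d /\ forall j, (j < N)%nat -> forall u, t0 < u < t0 + d -> u <= T -> h i j u <= g u).
    { intros [dd [Hdd Hdd']]. exists dd; split; [exact Hdd|]. intros u Hu j Hj. apply Hdd'; auto. }
    apply (fin_delta N t0 (fun j u => u <= T -> h i j u <= g u)).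
    intros j Hj.
    assert (Hle : h i j t0 <= HH N h t0).
    { unfold HH. apply Rle_trans with (maxR N (fun j0 => h i j0 t0)).
      apply (maxR_ge N (fun j0 => h i j0 t0) j Hj). apply (maxR_ge N (fun i0 => maxR N (fun j0 => h i0 j0 t0)) i Hi). }
    destruct (Rlt_dec (h i j t0) (g t0)) as [Hl|Hnl].
    - destruct (cont_eps _ _ _ (Hc i j Hi Hj t0 ltac:(lra)) (g t0 - h i j t0) ltac:(lra)) as [d [Hd0 Hd']].
      exists d. split; auto. intros u Hu HuT.
      specialize (Hd' u ltac:(lra) ltac:(rewrite Rabs_right; lra)).
      apply Rabs_lt_between in Hd'. assert (g t0 <= g u) by (unfold g; nra). lra.
    - assert (Heq : h i j t0 = g t0) by lra.
      assert (Hst : s < t0). { destruct (Req_dec s t0); [|lra]. subst t0. unfold g in Heq. nra. }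
      assert (HeqH : h i j t0 = HH N h t0) by lra.
      specialize (Hm i j Hi Hj t0 ltac:(lra) HeqH).
      destruct (deriv_below _ _ _ e (Hd i j Hi Hj t0 ltac:(lra)) ltac:(lra)) as [d [Hd0 Hd']].
      exists d. split; auto. intros u Hu HuT. specialize (Hd' u Hu).
      rewrite Heq in Hd'. unfold g in *. nra. }
  destruct (fin_delta N t0 (fun i u => forall j, (j < N)%nat -> u <= T -> h i j u <= g u) Hpair)
    as [d [Hd0 Hd']].
  set (t1 := t0 + Rmin d (T - t0) / 2).
  assert (Hm1 : 0 < Rmin d (T - t0)) by (apply Rmin_pos; lra).
  pose proof (Rmin_l d (T - t0)). pose proof (Rmin_r d (T - t0)).
  assert (Et1 : E t1).
  { split. unfold t1; lra. intros u Hu.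
    destruct (Rle_dec u t0). { apply (proj2 Et0). lra. }
    unfold HH. apply maxR_le. apply Hg0; lra. intros i Hi. apply maxR_le. apply Hg0; lra.
    intros j Hj. apply (Hd' i Hi u ltac:(unfold t1 in Hu; lra) j Hj). unfold t1 in Hu; lra. }
  specialize (Hub t1 Et1). unfold t1 in Hub. lra.
Qed.


Lemma is_derive_val (f : R -> R) x l l' : is_derive f x l -> l = l' -> is_derive f x l'.
Proof. intros H ->; auto. Qed.

Lemma within_le (D : R -> Prop) t : filter_le (within D (locally t)) (locally t).
Proof. intros P HP. unfold within. apply filter_imp with P; auto. Qed.

Lemma cont_mult_within (f g : R -> R) (F : (R -> Prop) -> Prop) {FF : Filter F} a b :
  filterlim f F (locally a) -> filterlim g F (locally b) ->
  filterlim (fun t => f t * g t) F (locally (a * b)).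
Proof. intros Hf Hg. apply (filterlim_comp_2 f g Rmult Hf Hg (filterlim_mult a b)). Qed.

Lemma cont_plus_within (f g : R -> R) (F : (R -> Prop) -> Prop) {FF : Filter F} a b :
  filterlim f F (locally a) -> filterlim g F (locally b) ->
  filterlim (fun t => f t + g t) F (locally (a + b)).
Proof. intros Hf Hg. apply (filterlim_comp_2 f g Rplus Hf Hg (filterlim_plus a b)). Qed.

Lemma cont_opp_within (f : R -> R) (F : (R -> Prop) -> Prop) {FF : Filter F} a :
  filterlim f F (locally a) -> filterlim (fun t => - f t) F (locally (- a)).
Proof. intros Hf. eapply filterlim_comp; [exact Hf|exact (filterlim_opp a)]. Qed.

Lemma cont_minus_within (f g : R -> R) (F : (R -> Prop) -> Prop) {FF : Filter F} a b :
  filterlim f F (locally a) -> filterlim g F (locally b) ->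
  filterlim (fun t => f t - g t) F (locally (a - b)).
Proof. intros Hf Hg. apply cont_plus_within; auto. apply cont_opp_within; auto. Qed.

Lemma exp_cont_within (D : R -> Prop) r s t :
  filterlim (fun u => exp (- r * (u - s))) (within D (locally t)) (locally (exp (- r * (t - s)))).
Proof.
  eapply filterlim_filter_le_1. apply within_le.
  apply (@ex_derive_continuous R_AbsRing R_NormedModule (fun u => exp (- r * (u - s)))). auto_derive. auto.
Qed.

Lemma core_rate (N : nat) (h h' : nat -> nat -> R -> R) (s T r : R) :
  s <= T ->
  (forall i j, (i < N)%nat -> (j < N)%nat -> forall t, s <= t <= T ->
      filterlim (h i j) (within (fun r => s <= r <= T) (locally t)) (locally (h i j t))) ->
  (forall i j, (i < N)%nat -> (j < N)%nat -> forall t, s < t < T -> is_derive (h i j) t (h' i j t)) ->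
  (forall i j, (i < N)%nat -> (j < N)%nat -> forall t, s < t < T -> h i j t = HH N h t -> h' i j t <= r * h i j t) ->
  HH N h T <= HH N h s * exp (r * (T - s)).
Proof.
  intros HsT Hc Hd Hm.
  set (ht := fun i j t => h i j t * exp (- r * (t - s))).
  set (ht' := fun i j t => (h' i j t - r * h i j t) * exp (- r * (t - s))).
  assert (HHt : forall t, HH N ht t = HH N h t * exp (- r * (t - s))).
  { intros t. unfold HH, ht. rewrite <- maxR_scal by (left; apply exp_pos).
    apply maxR_ext. intros i Hi. rewrite <- maxR_scal by (left; apply exp_pos). reflexivity. }
  assert (H := core N ht ht' s T HsT).
  rewrite !HHt in H.
  replace (- r * (s - s)) with 0 in H by ring. rewrite exp_0, Rmult_1_r in H.
  assert (HH N h T * exp (- r * (T - s)) <= HH N h s).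
  { apply H.
    - intros i j Hi Hj t Ht. unfold ht. apply cont_mult_within; [apply within_filter, locally_filter|apply Hc; auto|apply exp_cont_within].
    - intros i j Hi Hj t Ht. unfold ht, ht'.
      assert (He : is_derive (fun u => exp (- r * (u - s))) t (- r * exp (- r * (t - s)))).
      { auto_derive. auto. unfold Rminus. rewrite Rmult_1_r. reflexivity. }
      pose proof (is_derive_mult (h i j) (fun u => exp (- r * (u - s))) t _ _ (Hd i j Hi Hj t Ht) He Rmult_comm) as HM.
      eapply is_derive_val. exact HM. unfold plus, mult; simpl. ring.
    - intros i j Hi Hj t Ht Heq. unfold ht'. rewrite HHt in Heq. unfold ht in Heq.
      apply Rmult_eq_reg_r in Heq; [|apply Rgt_not_eq, exp_pos].
      specialize (Hm i j Hi Hj t Ht Heq).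
      assert (0 < exp (- r * (t - s))) by apply exp_pos. nra. }
  apply Rmult_le_compat_r with (r := exp (r * (T - s))) in H0; [|left; apply exp_pos].
  rewrite Rmult_assoc, <- exp_plus in H0. replace (- r * (T - s) + r * (T - s)) with 0 in H0 by ring.
  rewrite exp_0, Rmult_1_r in H0. exact H0.
Qed.


Definition sqd (d : nat) (y : nat -> nat -> R) i j := sumR d (fun k => (y i k - y j k) ^ 2).
Definition Fsq (N d : nat) (y : nat -> nat -> R) := maxR N (fun i => maxR N (fun j => sqd d y i j)).
Definition Dv N d a psi (y : nat -> nat -> R) i j :=
  sumR d (fun k => 2 * (y i k - y j k) * (rhs N d a psi y i k - rhs N d a psi y j k)).

Lemma sqd_nonneg d y i j : 0 <= sqd d y i j.
Proof. apply sumR_nonneg. intros k _. apply pow2_ge_0. Qed.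

Lemma sqd_le_F N d y i j : (i < N)%nat -> (j < N)%nat -> sqd d y i j <= Fsq N d y.
Proof. intros Hi Hj. unfold Fsq. eapply Rle_trans; [|apply (maxR_ge N _ i Hi)].
  apply (maxR_ge N (fun j0 => sqd d y i j0) j Hj). Qed.

Lemma sumR_opp n f : sumR n (fun k => - f k) = - sumR n f.
Proof. induction n; simpl; [lra|]. rewrite IHn; lra. Qed.

Lemma sumR_zero n : sumR n (fun _ => 0) = 0.
Proof. induction n; simpl; [lra|]. rewrite IHn; lra. Qed.

Lemma sumR_count_low N i g B : (i < N)%nat -> (forall l, (l < N)%nat -> - B <= g l) ->
  - ((INR N - 1) * B) <= sumR N (fun l => if Nat.eqb l i then 0 else g l).
Proof.
  intros Hi H. pose proof (sumR_count' N i (fun l => - g l) B Hi ltac:(intros l Hl; specialize (H l Hl); lra)).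
  cbv beta in H0.
  assert (E : sumR N (fun l => if Nat.eqb l i then 0 else - g l) = - sumR N (fun l => if Nat.eqb l i then 0 else g l)).
  { rewrite <- sumR_opp. apply sumR_ext. intros k _. destruct (Nat.eqb k i); lra. }
  rewrite E in H0. lra.
Qed.

Lemma rhs_ip N d a psi y m (u : nat -> R) :
  sumR d (fun k => u k * rhs N d a psi y m k) =
  / (INR N - 1) * sumR N (fun l => if Nat.eqb l m then 0 else
       a * psi (vnorm d (vsub (y m) (y l))) * sumR d (fun k => u k * (y l k - y m k))).
Proof.
  unfold rhs.
  rewrite (sumR_ext d _ (fun k => / (INR N - 1) * sumR N (fun l => u k * (if Nat.eqb l m then 0
       else a * psi (vnorm d (vsub (y m) (y l))) * (y l k - y m k))))).
  2:{ intros k _. rewrite (sumR_scal N (u k)). ring. }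
  rewrite sumR_scal. f_equal. rewrite sumR_swap. apply sumR_ext. intros l _.
  destruct (Nat.eqb l m).
  - transitivity (sumR d (fun _ => 0)). apply sumR_ext; intros; ring. rewrite sumR_zero; ring.
  - rewrite <- sumR_scal. apply sumR_ext; intros; ring.
Qed.

Lemma Dv_decomp N d a psi y i j :
  Dv N d a psi y i j = 2 * (/ (INR N - 1) * sumR N (fun l => if Nat.eqb l i then 0 else
       a * psi (vnorm d (vsub (y i) (y l))) * sumR d (fun k => (y i k - y j k) * (y l k - y i k))))
    - 2 * (/ (INR N - 1) * sumR N (fun l => if Nat.eqb l j then 0 else
       a * psi (vnorm d (vsub (y j) (y l))) * sumR d (fun k => (y i k - y j k) * (y l k - y j k)))).
Proof.
  rewrite <- !rhs_ip. rewrite <- !sumR_scal, <- sumR_minus. unfold Dv. apply sumR_ext; intros; ring.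
Qed.

Lemma S1_id d y i j l :
  sqd d y l j = sqd d y l i + 2 * sumR d (fun k => (y i k - y j k) * (y l k - y i k)) + sqd d y i j.
Proof. unfold sqd. rewrite <- sumR_scal, <- !sumR_plus. apply sumR_ext; intros; ring. Qed.

Lemma S2_id d y i j l :
  sqd d y l i = sqd d y l j - 2 * sumR d (fun k => (y i k - y j k) * (y l k - y j k)) + sqd d y i j.
Proof. unfold sqd. rewrite <- sumR_scal, <- sumR_minus, <- sumR_plus. apply sumR_ext; intros; ring. Qed.

Lemma S1_up d y i j l : - 2 * sumR d (fun k => (y i k - y j k) * (y l k - y i k)) <= sqd d y i j + sqd d y l i.
Proof. unfold sqd. rewrite <- sumR_scal, <- sumR_plus. apply sumR_le; intros k _; cbv beta.
  pose proof (pow2_ge_0 (y i k - y j k + (y l k - y i k))). nra. Qed.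

Lemma S2_up d y i j l : 2 * sumR d (fun k => (y i k - y j k) * (y l k - y j k)) <= sqd d y i j + sqd d y l j.
Proof. unfold sqd. rewrite <- sumR_scal, <- sumR_plus. apply sumR_le; intros k _; cbv beta.
  pose proof (pow2_ge_0 (y i k - y j k - (y l k - y j k))). nra. Qed.

Lemma S1_self d y i j : sumR d (fun k => (y i k - y j k) * (y j k - y i k)) = - sqd d y i j.
Proof. unfold sqd. rewrite <- sumR_opp. apply sumR_ext; intros; ring. Qed.

Lemma INR_N1 N : (2 <= N)%nat -> 1 <= INR N - 1.
Proof. intros H. apply le_INR in H. simpl in H. lra. Qed.

Lemma Dv_neg N d psi y i j K :
  (2 <= N)%nat -> (i < N)%nat -> (j < N)%nat -> (forall z, 0 < psi z) -> (forall z, psi z <= K) ->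
  sqd d y i j = Fsq N d y -> Dv N d (-1) psi y i j <= 4 * K * Fsq N d y.
Proof.
  intros HN Hi Hj Hp HK Hmax. rewrite Dv_decomp.
  assert (HF0 : 0 <= (Fsq N d y)) by (rewrite <- Hmax; apply sqd_nonneg).
  assert (A1 : sumR N (fun l => if Nat.eqb l i then 0 else
       -1 * psi (vnorm d (vsub (y i) (y l))) * sumR d (fun k => (y i k - y j k) * (y l k - y i k))) <= (INR N - 1) * (K * (Fsq N d y))).
  { apply sumR_count'; auto. intros l Hl; cbv beta.
    pose proof (S1_up d y i j l). pose proof (S1_id d y i j l).
    pose proof (sqd_le_F N d y l i Hl Hi). pose proof (sqd_le_F N d y l j Hl Hj).
    pose proof (sqd_nonneg d y l i). pose proof (Hp (vnorm d (vsub (y i) (y l)))). pose proof (HK (vnorm d (vsub (y i) (y l)))).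
    set (S := sumR d (fun k => (y i k - y j k) * (y l k - y i k))) in *.
    set (p := psi (vnorm d (vsub (y i) (y l)))) in *.
    assert (0 <= - S <= (Fsq N d y)) by lra. nra. }
  assert (A2 : - ((INR N - 1) * (K * (Fsq N d y))) <= sumR N (fun l => if Nat.eqb l j then 0 else
       -1 * psi (vnorm d (vsub (y j) (y l))) * sumR d (fun k => (y i k - y j k) * (y l k - y j k)))).
  { apply sumR_count_low; auto. intros l Hl; cbv beta.
    pose proof (S2_up d y i j l). pose proof (S2_id d y i j l).
    pose proof (sqd_le_F N d y l i Hl Hi). pose proof (sqd_le_F N d y l j Hl Hj).
    pose proof (sqd_nonneg d y l j). pose proof (Hp (vnorm d (vsub (y j) (y l)))). pose proof (HK (vnorm d (vsub (y j) (y l)))).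
    set (S := sumR d (fun k => (y i k - y j k) * (y l k - y j k))) in *.
    set (p := psi (vnorm d (vsub (y j) (y l)))) in *.
    assert (0 <= S <= (Fsq N d y)) by lra. nra. }
  pose proof (INR_N1 N HN).
  assert (0 < / (INR N - 1)) by (apply Rinv_0_lt_compat; lra).
  assert (Hq : / (INR N - 1) * (INR N - 1) = 1) by (field; lra).
  match type of A1 with ?X <= _ => set (X1 := X) in * end.
  match type of A2 with _ <= ?X => set (X2 := X) in * end.
  set (q := / (INR N - 1)) in *.
  assert (q * X1 <= q * ((INR N - 1) * (K * Fsq N d y))) by (apply Rmult_le_compat_l; lra).
  assert (q * (- ((INR N - 1) * (K * Fsq N d y))) <= q * X2) by (apply Rmult_le_compat_l; lra).
  replace (q * ((INR N - 1) * (K * Fsq N d y))) with (q * (INR N - 1) * (K * Fsq N d y)) in H1 by ring.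
  replace (q * - ((INR N - 1) * (K * Fsq N d y))) with (- (q * (INR N - 1) * (K * Fsq N d y))) in H2 by ring.
  rewrite Hq in H1, H2. lra.
Qed.

Lemma Dv_pos N d psi y i j c :
  (2 <= N)%nat -> (i < N)%nat -> (j < N)%nat -> (forall z, 0 < psi z) ->
  c <= psi (vnorm d (vsub (y i) (y j))) -> 0 <= c ->
  sqd d y i j = Fsq N d y -> Dv N d 1 psi y i j <= - (2 * c / (INR N - 1)) * sqd d y i j.
Proof.
  intros HN Hi Hj Hp Hc Hc0 Hmax.
  destruct (Nat.eq_dec i j) as [->|Hij].
  { unfold Dv, sqd. rewrite (sumR_ext d _ (fun _ => 0)). rewrite (sumR_ext d (fun k => _ ^ 2) (fun _ => 0)).
    rewrite sumR_zero. lra. intros; ring. intros; ring. }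
  rewrite Dv_decomp.
  assert (A1 : sumR N (fun l => if Nat.eqb l i then 0 else
       1 * psi (vnorm d (vsub (y i) (y l))) * sumR d (fun k => (y i k - y j k) * (y l k - y i k))) <=
       - (psi (vnorm d (vsub (y i) (y j)))) * sqd d y i j).
  { eapply Rle_trans. apply (sumR_le_term N _ j Hj).
    - intros l Hl. destruct (Nat.eqb l i). lra.
      pose proof (S1_id d y i j l). pose proof (sqd_le_F N d y l j Hl Hj).
      pose proof (sqd_nonneg d y l i). pose proof (Hp (vnorm d (vsub (y i) (y l)))).
      set (S := sumR d (fun k => (y i k - y j k) * (y l k - y i k))) in *.
      assert (S <= 0) by lra. nra.
    - rewrite (proj2 (Nat.eqb_neq j i)) by auto. rewrite S1_self. lra. }
  assert (A2 : 0 <= sumR N (fun l => if Nat.eqb l j then 0 else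
       1 * psi (vnorm d (vsub (y j) (y l))) * sumR d (fun k => (y i k - y j k) * (y l k - y j k)))).
  { apply sumR_nonneg. intros l Hl. destruct (Nat.eqb l j). lra.
    pose proof (S2_id d y i j l). pose proof (sqd_le_F N d y l i Hl Hi).
    pose proof (sqd_nonneg d y l j). pose proof (Hp (vnorm d (vsub (y j) (y l)))).
    set (S := sumR d (fun k => (y i k - y j k) * (y l k - y j k))) in *.
    assert (0 <= S) by lra. nra. }
  pose proof (INR_N1 N HN).
  assert (0 < / (INR N - 1)) by (apply Rinv_0_lt_compat; lra).
  pose proof (sqd_nonneg d y i j).
  unfold Rdiv.
  assert (c * sqd d y i j <= psi (vnorm d (vsub (y i) (y j))) * sqd d y i j) by nra.
  nra.
Qed.


Lemma within_sub (A B : R -> Prop) t : (forall r, B r -> A r) ->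
  filter_le (within B (locally t)) (within A (locally t)).
Proof. intros HBA P HP. unfold within in *. apply filter_imp with (2 := HP). intros r H Hb. apply H, HBA, Hb. Qed.

Lemma cont_sumR_sq (F : (R -> Prop) -> Prop) {FF : Filter F} m (f : nat -> R -> R) t0 :
  (forall k, (k < m)%nat -> filterlim (f k) F (locally (f k t0))) ->
  filterlim (fun r => sumR m (fun k => (f k r) ^ 2)) F (locally (sumR m (fun k => (f k t0) ^ 2))).
Proof.
  induction m; intros H; cbn [sumR].
  - apply filterlim_const.
  - apply (cont_plus_within (fun r => sumR m (fun k => f k r ^ 2)) (fun r => f m r ^ 2) F).
    apply IHm; intros; apply H; lia.
    apply filterlim_ext with (fun r => f m r * (f m r * 1)). intros; simpl; ring.
    replace (f m t0 ^ 2) with (f m t0 * (f m t0 * 1)) by (simpl; ring).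
    apply (cont_mult_within (f m) (fun r => f m r * 1) F); [apply H; lia|].
    apply (cont_mult_within (f m) (fun _ => 1) F); [apply H; lia| apply filterlim_const].
Qed.

Lemma deriv_sumR_sq m (f : nat -> R -> R) (f' : nat -> R) t :
  (forall k, (k < m)%nat -> is_derive (f k) t (f' k)) ->
  is_derive (fun r => sumR m (fun k => (f k r) ^ 2)) t (sumR m (fun k => 2 * f k t * f' k)).
Proof.
  induction m; intros H; cbn [sumR].
  - apply is_derive_val with 0. apply (is_derive_const 0). reflexivity.
  - eapply is_derive_val. apply (is_derive_plus (fun r => sumR m (fun k => f k r ^ 2)) (fun r => f m r ^ 2)).
    apply IHm; intros; apply H; lia. apply is_derive_pow. apply H; lia.
    unfold plus; simpl. ring.
Qed.

Definition hsq (d : nat) (x : nat -> R -> nat -> R) i j t := sqd d (fun m => x m t) i j.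

Lemma HH_Fsq N d x t : HH N (hsq d x) t = Fsq N d (fun m => x m t).
Proof. reflexivity. Qed.

Lemma hsq_cont N d tt alpha psi x0 x i j s T t :
  is_solution N d tt alpha psi x0 x -> (i < N)%nat -> (j < N)%nat -> 0 <= s -> s <= t <= T ->
  filterlim (hsq d x i j) (within (fun r => s <= r <= T) (locally t)) (locally (hsq d x i j t)).
Proof.
  intros [_ [Hc _]] Hi Hj Hs Ht. unfold hsq, sqd.
  apply (cont_sumR_sq (within (fun r => s <= r <= T) (locally t)) d (fun k r => x i r k - x j r k) t).
  intros k Hk.
  apply (cont_minus_within (fun r => x i r k) (fun r => x j r k) (within (fun r => s <= r <= T) (locally t))).
  - eapply filterlim_filter_le_1. apply (within_sub (fun r => 0 <= r)). intros; lra. apply Hc; auto; lra.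
  - eapply filterlim_filter_le_1. apply (within_sub (fun r => 0 <= r)). intros; lra. apply Hc; auto; lra.
Qed.

Lemma hsq_deriv N d tt alpha psi x0 x i j n t :
  is_solution N d tt alpha psi x0 x -> (i < N)%nat -> (j < N)%nat -> tt n < t < tt (S n) ->
  is_derive (hsq d x i j) t (Dv N d (alpha t) psi (fun m => x m t) i j).
Proof.
  intros [_ [_ Hd]] Hi Hj Ht. unfold hsq, sqd, Dv.
  apply (deriv_sumR_sq d (fun k r => x i r k - x j r k)
     (fun k => rhs N d (alpha t) psi (fun m => x m t) i k - rhs N d (alpha t) psi (fun m => x m t) j k) t).
  intros k Hk. eapply is_derive_val. apply (is_derive_minus (fun r => x i r k) (fun r => x j r k)).
  apply (Hd n i k Hi Hk t Ht). apply (Hd n j k Hj Hk t Ht). reflexivity.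
Qed.


Lemma phase_neg N d tt alpha psi x0 x K p s T :
  (2 <= N)%nat -> is_solution N d tt alpha psi x0 x ->
  (forall z, 0 < psi z) -> (forall z, psi z <= K) ->
  (forall n s, tt (2 * n + 1)%nat <= s <= tt (2 * n + 2)%nat -> alpha s = -1) ->
  0 <= s -> tt (2 * p + 1)%nat <= s -> s <= T -> T <= tt (2 * p + 2)%nat ->
  Fsq N d (fun m => x m T) <= Fsq N d (fun m => x m s) * exp (4 * K * (T - s)).
Proof.
  intros HN Hsol Hp HK Ha2 Hs0 H1 H2 H3.
  rewrite <- !HH_Fsq.
  apply (core_rate N (hsq d x) (fun i j t => Dv N d (alpha t) psi (fun m => x m t) i j) s T (4 * K) H2).
  - intros i j Hi Hj t Ht. eapply hsq_cont; eauto.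
  - intros i j Hi Hj t Ht. apply (hsq_deriv N d tt alpha psi x0 x i j (2 * p + 1)%nat t Hsol Hi Hj).
    replace (S (2 * p + 1)) with (2 * p + 2)%nat by lia. lra.
  - intros i j Hi Hj t Ht Hm. rewrite (Ha2 p t) by lra.
    rewrite Hm. rewrite HH_Fsq. apply Dv_neg; auto; rewrite <- HH_Fsq; exact Hm.
Qed.

Lemma phase_pos N d tt alpha psi x0 x c p s T :
  (2 <= N)%nat -> is_solution N d tt alpha psi x0 x ->
  (forall z, 0 < psi z) -> 0 <= c ->
  (forall n s, tt (2 * n)%nat < s < tt (2 * n + 1)%nat -> alpha s = 1) ->
  (forall t, s < t < T -> forall i j, (i < N)%nat -> (j < N)%nat -> c <= psi (vnorm d (vsub (x i t) (x j t)))) ->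
  0 <= s -> tt (2 * p)%nat <= s -> s <= T -> T <= tt (2 * p + 1)%nat ->
  Fsq N d (fun m => x m T) <= Fsq N d (fun m => x m s) * exp (- (2 * c / (INR N - 1)) * (T - s)).
Proof.
  intros HN Hsol Hp Hc Ha1 Hpsi Hs0 H1 H2 H3.
  rewrite <- !HH_Fsq.
  apply (core_rate N (hsq d x) (fun i j t => Dv N d (alpha t) psi (fun m => x m t) i j) s T _ H2).
  - intros i j Hi Hj t Ht. eapply hsq_cont; eauto.
  - intros i j Hi Hj t Ht. apply (hsq_deriv N d tt alpha psi x0 x i j (2 * p)%nat t Hsol Hi Hj).
    replace (S (2 * p)) with (2 * p + 1)%nat by lia. lra.
  - intros i j Hi Hj t Ht Hm. rewrite (Ha1 p t) by lra.
    apply Dv_pos; auto; try (apply Hpsi; auto); rewrite <- HH_Fsq; exact Hm.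
Qed.


Lemma termA_ge K D : 0 < K -> 0 <= D -> D < ln 2 / K -> 2 * K * D <= ln (exp (K * D) / (2 - exp (K * D))).
Proof.
  intros HK HD HD2.
  assert (HKD : K * D < ln 2). { apply Rmult_lt_reg_r with (/ K). apply Rinv_0_lt_compat; auto.
    rewrite Rmult_comm, <- Rmult_assoc, Rinv_l, Rmult_1_l by lra. exact HD2. }
  set (E := exp (K * D)).
  assert (HE1 : 1 <= E). { unfold E. pose proof (exp_ineq1_le (K * D)). nra. }
  assert (HE2 : E < 2). { unfold E. rewrite <- (exp_ln 2) by lra. apply exp_increasing; auto. }
  replace (2 * K * D) with (ln (E * E)).
  2:{ unfold E. rewrite <- exp_plus, ln_exp. ring. }
  apply ln_le. nra.
  unfold Rdiv. apply Rmult_le_reg_r with (2 - E). lra. replace (E * / (2 - E) * (2 - E)) with E by (field; lra). assert (0 <= E * ((E - 1) * (E - 1))) by (apply Rmult_le_pos; nra). nra.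
Qed.

Lemma termB_ge K psi0 D : 0 < psi0 -> psi0 <= K -> 0 <= D ->
  - 2 * psi0 * D <= ln (Rmax (1 - exp (- K * D)) (1 - psi0 / K * (1 - exp (- K * D)))).
Proof.
  intros Hp HpK HD.
  assert (HK : 0 < K) by lra.
  set (z := 1 - exp (- K * D)).
  assert (Hz0 : 0 <= z). { unfold z. assert (exp (- K * D) <= 1). { rewrite <- exp_0. destruct (Req_dec D 0).
     subst. rewrite Rmult_0_r. lra. left. apply exp_increasing. nra. } lra. }
  assert (Hz1 : z < 1). { unfold z. pose proof (exp_pos (- K * D)). lra. }
  assert (HzKD : z <= K * D). { unfold z. pose proof (exp_ineq1_le (- K * D)). lra. }
  set (y := psi0 / K * z).
  assert (Hy0 : 0 <= y). { unfold y. apply Rmult_le_pos; auto. apply Rlt_le, Rdiv_lt_0_compat; auto. }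
  assert (Hyz : y <= z). { unfold y. assert (psi0 / K <= 1). { apply Rmult_le_reg_r with K; auto. unfold Rdiv.
     rewrite Rmult_assoc, Rinv_l by lra. lra. } nra. }
  assert (HyD : y <= psi0 * D). { unfold y. unfold Rdiv. replace (psi0 * D) with (psi0 * / K * (K * D)) by (field; lra).
     apply Rmult_le_compat_l; auto. apply Rmult_le_pos; [lra|]. left; apply Rinv_0_lt_compat; auto. }
  set (m := Rmax z (1 - y)).
  assert (Hm1 : 1 - y <= m) by apply Rmax_r.
  assert (Hm2 : z <= m) by apply Rmax_l.
  assert (Hmh : 1 / 2 <= m) by lra.
  assert (Hm0 : 0 < m) by lra.
  assert (Hln : 1 - / m <= ln m).
  { pose proof (exp_ineq1_le (- ln m)). rewrite exp_Ropp, exp_ln in H by auto. lra. }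
  assert (- 2 * y <= 1 - / m).
  { replace (1 - / m) with ((m - 1) / m) by (field; lra).
    apply Rmult_le_reg_r with m; auto. replace ((m - 1) / m * m) with (m - 1) by (field; lra). nra. }
  fold z. fold y. fold m. lra.
Qed.


Lemma sum_n_sumR a n : sum_n a n = sumR (S n) a.
Proof. induction n. rewrite sum_O. simpl; lra. rewrite sum_Sn, IHn. unfold plus; simpl. ring. Qed.

Lemma tt_mono (tt : nat -> R) : (forall n, tt n < tt (S n)) -> forall m n, (m <= n)%nat -> tt m <= tt n.
Proof. intros H m n Hmn. induction Hmn. lra. specialize (H m0). lra. Qed.

Lemma parity n : exists p, n = (2 * p)%nat \/ n = (2 * p + 1)%nat.
Proof. induction n. exists 0%nat; lia. destruct IHn as [p [->| ->]]. exists p; lia. exists (S p); lia. Qed.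

Lemma locate (tt : nat -> R) t : tt 0%nat = 0 -> (forall n, tt n < tt (S n)) -> is_lim_seq tt p_infty -> 0 <= t ->
  exists n, tt n <= t <= tt (S n).
Proof.
  intros H0 Hinc Hinf Ht. apply is_lim_seq_spec in Hinf. destruct (Hinf t) as [M HM].
  specialize (HM M (le_n M)). clear Hinf. induction M.
  - lra.
  - destruct (Rlt_dec t (tt M)). apply IHM; auto. exists M; lra.
Qed.

Lemma exp_mono a b : a <= b -> exp a <= exp b.
Proof. intros H. destruct (Rle_lt_or_eq_dec _ _ H). left; apply exp_increasing; auto. subst; lra. Qed.

Lemma chain (Fx : R -> R) (tt : nat -> R) (A B : nat -> R) rho :
  (forall n, tt n < tt (S n)) ->
  (forall p, Fx (tt (2 * p + 1)%nat) <= Fx (tt (2 * p)%nat) * exp (- rho * B p)) ->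
  (forall p t, tt (2 * p)%nat <= t <= tt (2 * p + 1)%nat -> Fx t <= Fx (tt (2 * p)%nat)) ->
  (forall p t, tt (2 * p + 1)%nat <= t <= tt (2 * p + 2)%nat -> Fx t <= Fx (tt (2 * p + 1)%nat) * exp (A p)) ->
  (forall p, 0 <= A p) -> (forall p, 0 <= rho * B p) -> (forall t, 0 <= Fx t) ->
  forall p, Fx (tt (2 * p)%nat) <= Fx (tt 0%nat) * exp (sumR p A - rho * sumR p B)
   /\ forall t, tt (2 * p)%nat <= t <= tt (2 * p + 2)%nat -> Fx t <= Fx (tt 0%nat) * exp (sumR (S p) A - rho * sumR p B).
Proof.
  intros Hinc Hs Hm Hn HA HB HF0.
  set (F0 := Fx (tt 0%nat)).
  assert (HF00 : 0 <= F0) by apply HF0.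
  assert (Hi1 : forall p, tt (2 * p + 1)%nat <= tt (2 * p + 2)%nat).
  { intros p. replace (2 * p + 2)%nat with (S (2 * p + 1)) by lia. left; apply Hinc. }
  assert (Hi0 : forall p, tt (2 * p)%nat <= tt (2 * p + 1)%nat).
  { intros p. replace (2 * p + 1)%nat with (S (2 * p)) by lia. left; apply Hinc. }
  assert (Hneg : forall p t, tt (2 * p + 1)%nat <= t <= tt (2 * p + 2)%nat ->
            Fx t <= Fx (tt (2 * p)%nat) * exp (- rho * B p + A p)).
  { intros p t Ht. eapply Rle_trans. apply Hn; eauto.
    rewrite exp_plus, <- Rmult_assoc. apply Rmult_le_compat_r. left; apply exp_pos. apply Hs. }
  assert (Hmain : forall p, Fx (tt (2 * p)%nat) <= F0 * exp (sumR p A - rho * sumR p B)).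
  { induction p.
    - simpl. replace (0 - rho * 0) with 0 by ring. rewrite exp_0. unfold F0; lra.
    - replace (2 * S p)%nat with (2 * p + 2)%nat by lia.
      eapply Rle_trans. apply (Hneg p). split; [apply Hi1|lra].
      eapply Rle_trans. apply Rmult_le_compat_r. left; apply exp_pos. apply IHp.
      rewrite Rmult_assoc, <- exp_plus. simpl. right. f_equal. f_equal. ring. }
  intros p. split. apply Hmain.
  intros t Ht. simpl.
  destruct (Rle_dec t (tt (2 * p + 1)%nat)).
  - eapply Rle_trans. apply (Hm p). lra. eapply Rle_trans. apply (Hmain p).
    apply Rmult_le_compat_l; auto. apply exp_mono. pose proof (HA p). lra.
  - eapply Rle_trans. apply (Hneg p). lra.
    eapply Rle_trans. apply Rmult_le_compat_r. left; apply exp_pos. apply (Hmain p).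
    rewrite Rmult_assoc, <- exp_plus. apply Rmult_le_compat_l; auto.
    apply exp_mono. pose proof (HB p). lra.
Qed.


Lemma diam_sqrt N d y : diam N d y = sqrt (Fsq N d y).
Proof. unfold diam, Fsq. rewrite <- maxR_sqrt by (intros; apply maxR_ge0). apply maxR_ext. intros i _.
  rewrite <- maxR_sqrt by (intros; apply sqd_nonneg). reflexivity. Qed.

Lemma sumR_mono_n m n f : (m <= n)%nat -> (forall k, 0 <= f k) -> sumR m f <= sumR n f.
Proof. intros H Hf. induction H. lra. simpl. specialize (Hf m0). lra. Qed.

Theorem theorem5p1
  (N d : nat) (HN : (2 <= N)%nat) (Hd : (1 <= d)%nat)
  (psi : R -> R) (K : R)
  (Hpos : forall y, 0 < psi y)
  (Hbdd : exists B, forall y, Rabs (psi y) <= B)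
  (Hcont : forall y, continuous psi y)
  (HK : is_lub (fun r => exists y, r = Rabs (psi y)) K)
  (tt : nat -> R)
  (Ht0 : tt 0%nat = 0)
  (Hinc : forall n, tt n < tt (S n))
  (Hinf : is_lim_seq tt p_infty)
  (alpha : R -> R)
  (Ha0 : alpha 0 = 1)
  (Ha1 : forall n s, tt (2 * n)%nat < s < tt (2 * n + 1)%nat -> alpha s = 1)
  (Ha2 : forall n s, tt (2 * n + 1)%nat <= s <= tt (2 * n + 2)%nat -> alpha s = -1)
  (Hgap : forall n, tt (2 * n + 2)%nat - tt (2 * n + 1)%nat < ln 2 / K)
  (HA : ex_series (termA K tt))
  (x0 : nat -> nat -> R)
  (psi0 : R)
  (Hpsi0 : (exists y, Rabs y <= exp (Series (termA K tt)) * diam N d x0 /\ psi y = psi0)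
           /\ (forall y, Rabs y <= exp (Series (termA K tt)) * diam N d x0 -> psi0 <= psi y))
  (HB : is_lim_seq (sum_n (termB K psi0 tt)) m_infty)
  (x : nat -> R -> nat -> R)
  (Hsol : is_solution N d tt alpha psi x0 x) :
  is_lim (fun s => diam N d (fun i => x i s)) p_infty 0.
Proof.
  assert (HKpsi : forall z, psi z <= K).
  { intros z. destruct HK as [Hub _]. pose proof (Hub (Rabs (psi z)) (ex_intro _ z eq_refl)) as H.
    rewrite Rabs_right in H; auto. left; apply Hpos. }
  assert (HK0 : 0 < K) by (pose proof (Hpos 0); pose proof (HKpsi 0); lra).
  destruct Hpsi0 as [[y0 [_ Hy0]] Hpsi0l].
  assert (Hp0 : 0 < psi0) by (rewrite <- Hy0; apply Hpos).
  assert (Hp0K : psi0 <= K) by (rewrite <- Hy0; apply HKpsi).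
  pose proof (INR_N1 N HN) as HN1.
  pose proof (tt_mono tt Hinc) as Hmono.
  assert (Htt0 : forall n, 0 <= tt n) by (intros; rewrite <- Ht0; apply Hmono; lia).
  assert (Hi1 : forall p, tt (2 * p + 1)%nat <= tt (2 * p + 2)%nat) by (intros; apply Hmono; lia).
  assert (Hi0 : forall p, tt (2 * p)%nat <= tt (2 * p + 1)%nat) by (intros; apply Hmono; lia).
  set (Fx := fun t => Fsq N d (fun m => x m t)).
  assert (HFx0 : forall t, 0 <= Fx t) by (intros; apply maxR_ge0).
  set (F0 := Fx 0).
  set (SA := Series (termA K tt)).
  assert (HtA : forall p, 2 * K * (tt (2 * p + 2)%nat - tt (2 * p + 1)%nat) <= termA K tt p).
  { intros p. unfold termA. apply termA_ge; auto. specialize (Hi1 p). lra. }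
  assert (HtA0 : forall p, 0 <= termA K tt p).
  { intros p. specialize (HtA p). specialize (Hi1 p). nra. }
  assert (HsA : forall p, sumR (S p) (termA K tt) <= SA).
  { intros p. rewrite <- sum_n_sumR. apply is_lim_seq_incr_compare.
    apply (Series_correct _ HA). intros n. rewrite sum_Sn. unfold plus; simpl. specialize (HtA0 (S n)). lra. }
  assert (Hneg : forall p t, tt (2 * p + 1)%nat <= t <= tt (2 * p + 2)%nat ->
            Fx t <= Fx (tt (2 * p + 1)%nat) * exp (2 * termA K tt p)).
  { intros p t Ht. eapply Rle_trans.
    apply (phase_neg N d tt alpha psi x0 x K p (tt (2 * p + 1)%nat) t); auto; lra.
    apply Rmult_le_compat_l; auto. apply exp_mono. specialize (HtA p). nra. }
  assert (Hmon : forall p t, tt (2 * p)%nat <= t <= tt (2 * p + 1)%nat -> Fx t <= Fx (tt (2 * p)%nat)).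
  { intros p t Ht. eapply Rle_trans.
    apply (phase_pos N d tt alpha psi x0 x 0 p (tt (2 * p)%nat) t); auto; try lra.
    intros; left; apply Hpos.
    replace (- (2 * 0 / (INR N - 1)) * (t - tt (2 * p)%nat)) with 0 by (field; lra). rewrite exp_0, Rmult_1_r. apply Rle_refl. }
  assert (Hch1 := chain Fx tt (fun p => 2 * termA K tt p) (fun _ => 0) 0 Hinc).
  assert (Hbound : forall t, 0 <= t -> Fx t <= F0 * exp (2 * SA)).
  { intros t Ht. destruct (locate tt t Ht0 Hinc Hinf Ht) as [n Hn].
    destruct (parity n) as [p Hp].
    destruct Hch1 with p as [_ Hc].
    - intros q. replace (- 0 * 0) with 0 by ring. rewrite exp_0, Rmult_1_r. apply Hmon. split; [apply Hi0|lra].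
    - exact Hmon.
    - exact Hneg.
    - intros q. specialize (HtA0 q). lra.
    - intros; lra.
    - exact HFx0.
    - eapply Rle_trans. apply Hc.
      { destruct Hp as [->| ->]. split; [lra|]. specialize (Hi1 p). replace (S (2 * p)) with (2 * p + 1)%nat in Hn by lia. lra.
        replace (S (2 * p + 1)) with (2 * p + 2)%nat in Hn by lia. specialize (Hi0 p). lra. }
      rewrite Ht0. apply Rmult_le_compat_l. apply HFx0. apply exp_mono.
      rewrite sumR_scal. specialize (HsA p). lra. }
  assert (Hdiam0 : diam N d x0 = sqrt F0).
  { rewrite diam_sqrt. f_equal. unfold F0, Fx, Fsq. apply maxR_ext. intros i Hi. apply maxR_ext. intros j Hj.
    unfold sqd. apply sumR_ext. intros k Hk. destruct Hsol as [Hin _]. rewrite !Hin; auto. }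
  assert (Hpsib : forall t, 0 <= t -> forall i j, (i < N)%nat -> (j < N)%nat -> psi0 <= psi (vnorm d (vsub (x i t) (x j t)))).
  { intros t Ht i j Hi Hj. apply Hpsi0l.
    assert (Hv : vnorm d (vsub (x i t) (x j t)) = sqrt (sqd d (fun m => x m t) i j)) by reflexivity.
    rewrite Hv. rewrite Rabs_right by (apply Rle_ge, sqrt_pos).
    rewrite Hdiam0.
    apply Rle_trans with (sqrt (F0 * exp (2 * SA))).
    - apply sqrt_le_1_alt. eapply Rle_trans. apply (sqd_le_F N d _ i j Hi Hj). apply Hbound; auto.
    - rewrite sqrt_mult_alt by (apply HFx0). 
      replace (2 * SA) with (SA + SA) by ring. rewrite exp_plus, sqrt_square by (left; apply exp_pos).
      unfold SA; lra. }
  set (rho := 2 * psi0 / (INR N - 1)).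
  assert (Hrho : 0 < rho). { unfold rho. apply Rdiv_lt_0_compat; lra. }
  set (B := fun p => tt (2 * p + 1)%nat - tt (2 * p)%nat).
  assert (HB0 : forall p, 0 <= B p) by (intros; unfold B; specialize (Hi0 p); lra).
  assert (Hch2 := chain Fx tt (fun p => 2 * termA K tt p) B rho Hinc).
  assert (Hfin : forall p t, tt (2 * p)%nat <= t <= tt (2 * p + 2)%nat ->
             Fx t <= F0 * exp (2 * SA - rho * sumR p B)).
  { intros p t Ht. destruct Hch2 with p as [_ Hc].
    - intros q. apply (phase_pos N d tt alpha psi x0 x psi0 q); auto; try lra.
      intros t0 Ht0' i j Hi Hj. apply Hpsib; auto. specialize (Htt0 (2 * q)%nat). lra.
    - exact Hmon.
    - exact Hneg.
    - intros q. specialize (HtA0 q). lra.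
    - intros q. specialize (HB0 q). nra.
    - exact HFx0.
    - eapply Rle_trans. apply Hc; auto.
      rewrite Ht0. apply Rmult_le_compat_l. apply HFx0. apply exp_mono.
      rewrite sumR_scal. specialize (HsA p). lra. }
  assert (Hdiv : forall L, exists P, L < sumR P B).
  { intros L. apply is_lim_seq_spec in HB. destruct (HB (- 2 * psi0 * L)) as [n Hn].
    specialize (Hn n (le_n n)). rewrite sum_n_sumR in Hn. exists (S n).
    assert (sumR (S n) (fun q => - 2 * psi0 * B q) <= sumR (S n) (termB K psi0 tt)).
    { apply sumR_le. intros q _. unfold termB, B. cbv zeta. apply termB_ge; auto. apply HB0. }
    rewrite (sumR_scal (S n) (- 2 * psi0)) in H. nra. }
  apply is_lim_spec. intros eps. simpl.
  set (e2 := eps * eps).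
  assert (He2 : 0 < e2) by (unfold e2; pose proof (cond_pos eps); nra).
  set (L := (2 * SA - ln (e2 / (F0 + 1))) / rho + 1).
  destruct (Hdiv L) as [P HP].
  exists (tt (2 * P)%nat). intros s Hs.
  assert (Hs0 : 0 <= s) by (specialize (Htt0 (2 * P)%nat); lra).
  destruct (locate tt s Ht0 Hinc Hinf Hs0) as [n Hn].
  assert (HnP : (2 * P <= n)%nat).
  { destruct (Nat.le_gt_cases (2 * P) n) as [|Hlt]; auto. exfalso. assert (tt (S n) <= tt (2 * P)%nat) by (apply Hmono; lia). lra. }
  destruct (parity n) as [p Hp].
  assert (HpP : (P <= p)%nat) by lia.
  assert (Hsp : tt (2 * p)%nat <= s <= tt (2 * p + 2)%nat).
  { destruct Hp as [-> | ->]. split; [lra|]. specialize (Hi1 p). replace (S (2 * p)) with (2 * p + 1)%nat in Hn by lia. lra.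
    replace (S (2 * p + 1)) with (2 * p + 2)%nat in Hn by lia. specialize (Hi0 p). lra. }
  specialize (Hfin p s Hsp).
  assert (Hsum : sumR P B <= sumR p B) by (apply sumR_mono_n; auto).
  assert (Hexp : exp (2 * SA - rho * sumR p B) < e2 / (F0 + 1)).
  { assert (0 < e2 / (F0 + 1)) by (apply Rdiv_lt_0_compat; [lra| specialize (HFx0 0); unfold F0; lra]).
    rewrite <- (exp_ln (e2 / (F0 + 1))) by auto. apply exp_increasing.
    assert (rho * L < rho * sumR p B) by (apply Rmult_lt_compat_l; lra).
    unfold L in H0. replace (rho * ((2 * SA - ln (e2 / (F0 + 1))) / rho + 1)) with (2 * SA - ln (e2 / (F0 + 1)) + rho) in H0 by (field; lra).
    lra. }
  assert (HFs : Fx s < e2).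
  { assert (HF0' : 0 <= F0) by apply HFx0.
    assert (F0 * exp (2 * SA - rho * sumR p B) <= F0 * (e2 / (F0 + 1))) by (apply Rmult_le_compat_l; lra).
    assert (F0 * (e2 / (F0 + 1)) < e2).
    { apply Rmult_lt_reg_r with (F0 + 1). lra. replace (F0 * (e2 / (F0 + 1)) * (F0 + 1)) with (F0 * e2) by (field; lra). nra. }
    lra. }
  rewrite diam_sqrt. rewrite Rminus_0_r. rewrite Rabs_right by (apply Rle_ge, sqrt_pos).
  rewrite <- (sqrt_square eps) by (left; apply cond_pos).
  apply sqrt_lt_1_alt. split. apply HFx0. exact HFs.
Qed.
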